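(* Consider the ADQSP protocol (context) with $\Delta_{\min}>0$ and horizon $t_{\max}\in\{1,2,\dots\}\cup\{\infty\}$, on a connected graph in which all nodes except one node $i$ are corrupt, i.e. $\mathcal{V}_c=\mathcal{V}\setminus\{i\}$ (so $\mathcal{N}_{i,h}=\emptyset$). Let the private data $S_1,\dots,S_n$ be mutually independent real random variables. Then $$\mathrm{I}(S_i;\mathcal{O})=\mathrm{I}\Big(S_i;\ \big\{S_i+c_{i,k}N_{k|i}^{(t+1)}\big\}_{k\in\mathcal{N}_i,\ 0\le t< t_{\max}}\Big),\qquad c_{i,k}=\frac{1+c\,d_i}{(1-\theta)\,2c\,B_{i|k}},$$ where $N_{k|i}^{(t+1)}$ is the quantization error of the message $\Delta\hat z_{k|i}^{(t+1)}$ sent by node $i$ to node $k$.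
   Context: Graph: $G=(\mathcal{V},\mathcal{E})$ connected undirected, $\mathcal{V}=\{1,\dots,n\}$, $\mathcal{N}_i$ neighbours of $i$, $d_i=|\mathcal{N}_i|$; for an edge $\{i,j\}$ with $i<j$, $B_{i|j}=1$, $B_{j|i}=-1$. $\mathcal{V}_c$ corrupt nodes, $\mathcal{V}_h=\mathcal{V}\setminus\mathcal{V}_c$, $\mathcal{E}_h$ edges with both endpoints honest, $\mathcal{E}_c=\mathcal{E}\setminus\mathcal{E}_h$, $\mathcal{N}_{j,h}=\mathcal{N}_j\cap\mathcal{V}_h$. ADQSP protocol: constants $c>0$, $\theta\in[0,1)$, $\sigma_z^2>0$, $\Delta^{(0)}>0$, $\gamma\in(0,1)$, $\Delta_{\min}\ge0$, and $\Delta^{(t)}=\max\{\gamma^t\Delta^{(0)},\Delta_{\min}\}$. For every ordered pair $(i,j)$ with $j\in\mathcal{N}_i$, $Z_{i|j}^{(0)}\sim\mathcal{N}(0,\sigma_z^2)$, all independent and independent of the data; both endpoints of an edge learn both initial values on it; set $\hat z^{(0)}=z^{(0)}$. For $t\ge0$ and $j\in\mathcal{N}_i$: $x_i^{(t+1)}=\big(s_i-\sum_{j\in\mathcal{N}_i}B_{i|j}\hat z_{i|j}^{(t)}\big)/(1+cd_i)$; $z_{j|i}^{(t+1)}=\theta\hat z_{j|i}^{(t)}+(1-\theta)\big(\hat z_{i|j}^{(t)}+2cB_{i|j}x_i^{(t+1)}\big)$; $\Delta z_{j|i}^{(t+1)}=z_{j|i}^{(t+1)}-\hat z_{j|i}^{(t)}$;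 $\Delta\hat z_{j|i}^{(t+1)}=\Delta z_{j|i}^{(t+1)}+N_{j|i}^{(t+1)}$ (dithered quantization); $\hat z_{j|i}^{(t+1)}=\hat z_{j|i}^{(t)}+\Delta\hat z_{j|i}^{(t+1)}$. Node $i$ sends $\Delta\hat z_{j|i}^{(t+1)}$ to $j$. The quantization errors $N_{j|i}^{(t)}$ are mutually independent, $N_{j|i}^{(t)}$ uniform on $[-\Delta^{(t)}/2,\Delta^{(t)}/2]$, and independent of the data and of $Z^{(0)}$. Iterations $t+1=1,\dots,t_{\max}$. Adversary view: $\mathcal{O}=\{S_j\}_{j\in\mathcal{V}_c}\cup\{Z_{j|k}^{(0)},Z_{k|j}^{(0)}\}_{\{j,k\}\in\mathcal{E}_c}\cup\{\Delta\hat Z_{j|k}^{(t)}: \{j,k\}\in\mathcal{E},\ 1\le t\le t_{\max}\}$ (both directions on every edge). $\mathrm{I}$ denotes mutual information. *)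

(* Defs.v *)
From HB Require Import structures.
From mathcomp Require Import all_boot all_order all_algebra.
From mathcomp Require Import all_classical all_reals all_analysis.
Set Implicit Arguments. Unset Strict Implicit. Unset Printing Implicit Defensive.
Import Order.TTheory GRing.Theory Num.Theory.
Local Open Scope classical_set_scope.
Local Open Scope ring_scope.

(* Mutual information between two sub-sigma-algebras F, G of the       *)
(* sample space, defined (Dobrushin / Gelfand-Yaglom-Pinsker) as the   *)
(* supremum over finite measurable partitions {A_k} of F and {B_l} of  *)
(* G of  sum_{k,l} P(A_k & B_l) ln (P(A_k & B_l)/(P(A_k)P(B_l))),      *)
(* with the convention 0 ln 0 = 0.  For random variables X, Y this is  *)
(* I(X;Y) with F = sigma(X), G = sigma(Y).                             *)
Section InfoTheory.
Context {R : realType} {d : measure_display} {Omega : measurableType d}.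
Variable P : probability Omega R.

Definition is_fpart (F : set (set Omega)) (m : nat) (A : 'I_m -> set Omega) :=
  [/\ forall k, F (A k),
      \bigcup_(k in [set: 'I_m]) A k = [set: Omega] &
      forall k l, k != l -> A k `&` A l = set0].

Definition pr (E : set Omega) : R := fine (P E).

Definition mi_term (pab pa pb : R) : R :=
  if pab == 0 then 0 else pab * ln (pab / (pa * pb)).

Definition mi_sum m m' (A : 'I_m -> set Omega) (B : 'I_m' -> set Omega) : R :=
  \sum_(k < m) \sum_(l < m') mi_term (pr (A k `&` B l)) (pr (A k)) (pr (B l)).

Definition mutual_info (F G : set (set Omega)) : \bar R :=
  ereal_sup [set x | exists m m' (A : 'I_m -> set Omega) (B : 'I_m' -> set Omega),
               [/\ is_fpart F A, is_fpart G B & x = (mi_sum A B)%:E]].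

Definition sigma_gen {I : Type} (D : set I) (X : I -> Omega -> R) : set (set Omega) :=
  <<s [set E | exists k, D k /\ exists B : set R, measurable B /\ E = X k @^-1` B] >>.

Definition sigma_rv (X : Omega -> R) : set (set Omega) :=
  sigma_gen [set: unit] (fun _ => X).

Definition mutually_independent {I : eqType} (D : set I) (X : I -> Omega -> R) :=
  forall J : seq I, uniq J -> (forall k, k \in J -> D k) ->
  forall B : I -> set R, (forall k, measurable (B k)) ->
    pr (\bigcap_(k in [set` J]) X k @^-1` B k) = \prod_(k <- J) pr (X k @^-1` B k).

End InfoTheory.

Definition simple_graph (n : nat) (adj : rel 'I_n) :=
  symmetric adj /\ irreflexive adj.

Definition connected_graph (n : nat) (adj : rel 'I_n) :=
  forall u v, connect adj u v.

Definition degree (n : nat) (adj : rel 'I_n) (i : 'I_n) : nat := #|[set k | adj i k]|.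

Definition Bsgn {R : realType} (n : nat) (i j : 'I_n) : R :=
  if (i < j)%N then 1 else -1.

(* horizon t_max : Some T (T >= 1) or None = infinity *)
Definition in_horizon (tmax : option nat) (t : nat) : bool :=
  match tmax with Some T => (t <= T)%N | None => true end.

Definition qstep {R : realType} (gamma Delta0 Deltamin : R) (t : nat) : R :=
  Num.max (gamma ^+ t * Delta0) Deltamin.

(* ADQSP recursion, as a deterministic function of the data s, the     *)
(* initial values z0 (z0 j i = z_{j|i}^(0)) and the quantization errors *)
(* nq (nq t j i = N_{j|i}^(t)).                                         *)
Section ADQSP.
Context {R : realType} (n : nat) (adj : rel 'I_n) (c theta : R).
Variables (s : 'I_n -> R) (z0 : 'I_n -> 'I_n -> R) (nq : nat -> 'I_n -> 'I_n -> R).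

Definition xnew (zh : 'I_n -> 'I_n -> R) (i : 'I_n) : R :=
  (s i - \sum_(j | adj i j) Bsgn i j * zh i j) / (1 + c * (degree adj i)%:R).

Definition znew (zh : 'I_n -> 'I_n -> R) (j i : 'I_n) : R :=
  theta * zh j i + (1 - theta) * (zh i j + 2 * c * Bsgn i j * xnew zh i).

Fixpoint zhat (t : nat) : 'I_n -> 'I_n -> R :=
  match t with
  | 0 => z0
  | t'.+1 => fun j i =>
      zhat t' j i + ((znew (zhat t') j i - zhat t' j i) + nq t'.+1 j i)
  end.

(* transmitted message Delta zhat_{j|i}^(t) (t >= 1), sent by i to j *)
Definition dzhat (t : nat) (j i : 'I_n) : R :=
  (znew (zhat t.-1) j i - zhat t.-1 j i) + nq t j i.

End ADQSP.

(* Main.v *)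
Require Import Defs.
From HB Require Import structures.
From mathcomp Require Import all_boot all_order all_algebra.
From mathcomp Require Import all_classical all_reals all_analysis.
From mathcomp Require Import measurable_realfun.
From mathcomp Require Import ring lra.
Set Implicit Arguments. Unset Strict Implicit. Unset Printing Implicit Defensive.
Import Order.TTheory GRing.Theory Num.Theory.
Import numFieldNormedType.Exports.
Local Open Scope classical_set_scope.
Local Open Scope ring_scope.

Section PrBasics.
Context {R : realType} {d : measure_display} {Omega : measurableType d}.
Variable P : probability Omega R.

Lemma prE E : measurable E -> P E = (pr P E)%:E.
Proof. by move=> mE; rewrite /pr fineK // fin_num_measure. Qed.

Lemma pr_ge0 E : 0 <= pr P E.
Proof. exact/fine_ge0/measure_ge0. Qed.

Lemma pr_le1 E : measurable E -> pr P E <= 1.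
Proof. by move=> mE; rewrite -lee_fin -prE // probability_le1. Qed.

Lemma prT : pr P setT = 1.
Proof. by rewrite /pr probability_setT. Qed.

Lemma pr0 : pr P set0 = 0.
Proof. by rewrite /pr measure0. Qed.

Lemma prU A B : measurable A -> measurable B -> A `&` B = set0 ->
  pr P (A `|` B) = pr P A + pr P B.
Proof.
move=> mA mB AB; apply/eqP; rewrite -eqe EFinD -!prE //; last exact: measurableU.
by rewrite measureU.
Qed.

Lemma pr_le A B : measurable A -> measurable B -> A `<=` B -> pr P A <= pr P B.
Proof.
by move=> mA mB AB; rewrite -lee_fin -!prE //; apply: le_measure => //; rewrite inE.
Qed.

Lemma prUle A B : measurable A -> measurable B -> pr P (A `|` B) <= pr P A + pr P B.
Proof.
move=> mA mB; rewrite -lee_fin EFinD -!prE //; last exact: measurableU.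
exact: measureU2.
Qed.

Lemma pr_setC A : measurable A -> pr P (~` A) = 1 - pr P A.
Proof.
move=> mA; apply/eqP; rewrite -eqe EFinB -!prE //; last exact: measurableC.
by rewrite probability_setC.
Qed.

Lemma pr_split A B : measurable A -> measurable B ->
  pr P A = pr P (A `&` B) + pr P (A `&` ~` B).
Proof.
move=> mA mB; rewrite -prU; first (congr (pr P _); rewrite -setIUr setUCr setIT //).
- exact: measurableI.
- by apply: measurableI => //; exact: measurableC.
- by rewrite setIACA setICr setI0.
Qed.

Lemma pr_bigU (K : eqType) (s : seq K) (f : K -> set Omega) :
  uniq s -> (forall c, measurable (f c)) ->
  (forall a b, a != b -> f a `&` f b = set0) ->
  pr P (\big[setU/set0]_(c <- s) f c) = \sum_(c <- s) pr P (f c).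
Proof.
move=> + mf dis; elim: s => [|a s IH]; first by rewrite !big_nil pr0.
move=> /= /andP [as_ us]; rewrite !big_cons prU ?IH //.
- by apply: bigsetU_measurable.
- rewrite big_distrr /= big1_seq // => b /andP [_ bs]; apply: dis.
  by apply: contraNneq as_ => ->.
Qed.

End PrBasics.

Section Phi.
Context {R : realType}.

Definition phi (x z : R) : R := if x == 0 then 0 else x * ln (x / z).

Lemma mi_termE (x a y : R) : mi_term x a y = phi x (a * y).
Proof. by []. Qed.

Lemma phi_scale (x z p : R) : 0 <= p -> phi (x * p) (z * p) = p * phi x z.
Proof.
rewrite le_eqVlt => /orP [/eqP <-|p0].
  by rewrite /phi mulr0 eqxx mul0r.
rewrite /phi mulf_eq0 (gt_eqF p0) orbF.
case: ifP => _; first by rewrite mulr0.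
by rewrite -mulf_div divff ?(gt_eqF p0) // mulr1 mulrAC mulrC.
Qed.

Lemma phi_pt (x z X Z : R) : 0 <= x -> 0 <= z -> (0 < x -> 0 < z) ->
  0 < X -> 0 < Z ->
  x * ln (X / Z) + x - z * X / Z <= phi x z.
Proof.
move=> x0 z0 xz X0 Z0; rewrite /phi.
case: (eqVneq x 0) => [->|xn0].
  have : 0 <= z * X / Z.
    by apply: divr_ge0; [apply: mulr_ge0 => //; apply: ltW|apply: ltW].
  rewrite mul0r; lra.
have xp : 0 < x by rewrite lt_def xn0.
have zp := xz xp.
set u := z * X / (x * Z).
have up : 0 < u by rewrite /u divr_gt0 ?mulr_gt0.
have h : ln u <= u - 1.
  have := @le_ln1Dx R (u - 1); rewrite [1 + _]addrC subrK; apply.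
  lra.
have e : ln (x / z) = ln (X / Z) - ln u.
  rewrite /u -ln_div ?posrE ?divr_gt0 ?mulr_gt0 //; congr ln.
  by field; rewrite !gt_eqF.
rewrite e mulrBr.
have : x * ln u <= x * (u - 1) by rewrite ler_pM2l.
have -> : x * (u - 1) = z * X / Z - x.
  rewrite /u; field; rewrite !gt_eqF //.
lra.
Qed.

Lemma logsum (K : finType) (Q : pred K) (x z : K -> R) :
  (forall k, 0 <= x k) -> (forall k, 0 <= z k) -> (forall k, 0 < x k -> 0 < z k) ->
  phi (\sum_(k | Q k) x k) (\sum_(k | Q k) z k) <= \sum_(k | Q k) phi (x k) (z k).
Proof.
move=> x0 z0 xz.
set X := \sum_(k | Q k) x k; set Z := \sum_(k | Q k) z k.
have X0 : 0 <= X by apply: sumr_ge0.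
case: (eqVneq X 0) => [XE|Xn0].
  rewrite /phi XE eqxx big1 // => k Qk.
  by rewrite (psumr_eq0P (fun k _ => x0 k) XE) // eqxx.
have Xp : 0 < X by rewrite lt_def Xn0.
have [k0 [Qk0 xk0]] : exists k, Q k /\ 0 < x k.
  case: (pselect (exists k, Q k /\ 0 < x k)) => // H; exfalso.
  move/eqP: Xn0; apply; apply: big1 => k Qk.
  have := x0 k; rewrite le_eqVlt => /orP [/eqP <- //|lt].
  by exfalso; apply: H; exists k.
have Zp : 0 < Z.
  apply: (lt_le_trans (xz _ xk0)); rewrite /Z (bigD1 k0) //=.
  by rewrite lerDl sumr_ge0.
apply: le_trans _ (@ler_sum _ _ (index_enum K) Q
  (fun k => x k * ln (X / Z) + x k - z k * X / Z) (fun k => phi (x k) (z k))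
  (fun k _ => @phi_pt (x k) (z k) X Z (x0 k) (z0 k) (@xz k) Xp Zp)).
rewrite !big_split /= sumrN -!big_distrl /= -/X -/Z.
have -> : Z * X / Z = X by field; rewrite gt_eqF.
by rewrite /phi (gt_eqF Xp) addrK.
Qed.

End Phi.

Section MS.
Context {R : realType} {d : measure_display} {Omega : measurableType d}.
Variable P : probability Omega R.

Definition mpart (K : finType) (f : K -> set Omega) :=
  [/\ forall k, measurable (f k), forall w, exists k, f k w &
      forall a b, a != b -> f a `&` f b = set0].

Lemma cover_bigU (K : finType) (f : K -> set Omega) X :
  (forall w, exists k, f k w) ->
  X = \big[setU/set0]_(c <- index_enum K) (X `&` f c).
Proof.
move=> cov; rewrite -bigcup_seq; apply/seteqP; split => [w Xw|w [c _ [] //]].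
by have [k fk] := cov w; exists k => //=; rewrite mem_index_enum.
Qed.

Lemma pr_part (K : finType) (f : K -> set Omega) X : mpart f -> measurable X ->
  pr P X = \sum_(c : K) pr P (X `&` f c).
Proof.
move=> [mf cov dis] mX; rewrite {1}(cover_bigU X cov) pr_bigU ?index_enum_uniq //.
- by move=> c; apply: measurableI.
- by move=> a b ab; rewrite setIACA dis // setI0.
Qed.

Variables (m : nat) (A : 'I_m -> set Omega).
Hypothesis mA : forall k, measurable (A k).

Definition msT (K : finType) (B : K -> set Omega) : R :=
  \sum_(k < m) \sum_(l : K) mi_term (pr P (A k `&` B l)) (pr P (A k)) (pr P (B l)).

Lemma msT_refine (K L : finType) (C : K -> set Omega) (B : L -> set Omega) :
  mpart C -> mpart B -> (forall c, exists l, C c `<=` B l) -> msT B <= msT C.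
Proof.
move=> pC pB H; have [g hg] := choice H.
have [mC covC disC] := pC; have [mB covB disB] := pB.
have key X : measurable X -> forall l,
    pr P (X `&` B l) = \sum_(c | g c == l) pr P (X `&` C c).
  move=> mX l; rewrite (pr_part pC (measurableI _ _ mX (mB l))).
  rewrite [RHS]big_mkcond /=; apply: eq_bigr => c _.
  case: eqP => [<-|ne].
    by congr (pr P _); rewrite -setIA; congr (_ `&` _); apply/setIidr/hg.
  rewrite (_ : _ `&` _ = set0) ?pr0 //; apply/seteqP; split => // w [[_ Bw] Cw].
  have := disB l (g c); rewrite (_ : (l != g c) = true); last by apply/eqP => E; apply: ne.
  by move=> /(_ isT) E; rewrite -E; split => //; apply: hg.
rewrite /msT; apply: ler_sum => k _.
rewrite (partition_big g xpredT) //=; apply: ler_sum => l _.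
rewrite key // -(setTI (B l)) key //.
under [in X in _ <= X]eq_bigr => c _ do rewrite mi_termE.
rewrite mi_termE mulr_sumr.
under [in X in phi _ X]eq_bigr => c _ do rewrite setTI.
apply: logsum.
- by move=> c; exact: pr_ge0.
- by move=> c; apply: mulr_ge0; apply: pr_ge0.
move=> c xp; apply: mulr_gt0.
  apply: lt_le_trans xp _; apply: pr_le (measurableI _ _ (mA k) (mC c)) (mA k) _.
  exact: subIsetl.
apply: lt_le_trans xp _; apply: pr_le (measurableI _ _ (mA k) (mC c)) (mC c) _.
exact: subIsetr.
Qed.

Lemma msT_prod (I J : finType) (f : I -> set Omega) (g : J -> set Omega) :
  mpart g ->
  (forall k i j, pr P (A k `&` (f i `&` g j)) = pr P (A k `&` f i) * pr P (g j)) ->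
  (forall i j, pr P (f i `&` g j) = pr P (f i) * pr P (g j)) ->
  msT (fun p : I * J => f p.1 `&` g p.2) = msT f.
Proof.
move=> pg hA hF; rewrite /msT; apply: eq_bigr => k _.
rewrite -(pair_big xpredT xpredT (fun i j =>
  mi_term (pr P (A k `&` (f i `&` g j))) (pr P (A k)) (pr P (f i `&` g j)))) /=.
apply: eq_bigr => i _.
under eq_bigr => j _ do rewrite hA hF !mi_termE mulrA phi_scale ?pr_ge0 //.
rewrite -big_distrl /=.
have -> : \sum_(j : J) pr P (g j) = 1.
  by rewrite -(@prT _ _ _ P) (pr_part pg measurableT); apply: eq_bigr => j _; rewrite setTI.
rewrite mul1r.
by rewrite mi_termE.
Qed.

Lemma msT_le_mi (A0 F : set (set Omega)) (K : finType) (f : K -> set Omega) :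
  is_fpart A0 A -> (forall k, F (f k)) -> (forall w, exists k, f k w) ->
  (forall a b, a != b -> f a `&` f b = set0) ->
  ((msT f)%:E <= mutual_info P A0 F)%E.
Proof.
move=> pA Ff cov dis.
pose f' := fun r : 'I_#|K| => f (enum_val r).
have -> : msT f = mi_sum P A f'.
  rewrite /msT /mi_sum; apply: eq_bigr => k _.
  by rewrite (reindex (enum_val : 'I_#|K| -> K)) //; exact: onW_bij (enum_val_bij K).
apply: ereal_sup_ubound; exists m, #|K|, A, f'; split => //.
split.
- by move=> r; apply: Ff.
- apply/seteqP; split => // w _; have [k fk] := cov w.
  by exists (enum_rank k) => //; rewrite /f' enum_rankK.
- move=> a b ab; apply: dis; apply: contra ab => /eqP E.
  by apply/eqP; apply: enum_val_inj.
Qed.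

End MS.

Section SigmaHelpers.
Context {T : pointedType} (F0 : set (set T)).
Lemma sgI A B : <<s F0 >> A -> <<s F0 >> B -> <<s F0 >> (A `&` B).
Proof. exact: (@measurableI _ (g_sigma_algebraType F0)). Qed.
Lemma sgC A : <<s F0 >> A -> <<s F0 >> (~` A).
Proof. exact: (@measurableC _ (g_sigma_algebraType F0)). Qed.
Lemma sgU A B : <<s F0 >> A -> <<s F0 >> B -> <<s F0 >> (A `|` B).
Proof. exact: (@measurableU _ (g_sigma_algebraType F0)). Qed.
Lemma sgT : <<s F0 >> setT.
Proof. exact: (@measurableT _ (g_sigma_algebraType F0)). Qed.
Lemma sg0 : <<s F0 >> set0.
Proof. exact: (@measurable0 _ (g_sigma_algebraType F0)). Qed.
End SigmaHelpers.

Lemma bigsetU_memP {T} (K : finType) (Q : pred K) (F : K -> set T) w :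
  (\big[setU/set0]_(i | Q i) F i) w <-> exists i, Q i /\ F i w.
Proof.
rewrite big_mkcond -bigcup_seq; split.
  by move=> [i _]; case: ifP => // Qi Fi; exists i.
by move=> [i [Qi Fi]]; exists i; [rewrite /= mem_index_enum | rewrite Qi].
Qed.

Section Frames.
Context {T : pointedType}.

Definition fpartT (S : set (set T)) (K : finType) (f : K -> set T) :=
  [/\ forall k, S (f k), forall w, exists k, f k w &
      forall a b, a != b -> f a `&` f b = set0].

Definition cellok (I J : finType) (f : I -> set T) (g : J -> set T) (E : set T) :=
  forall i j, f i `&` g j `<=` E \/ f i `&` g j `<=` ~` E.

Definition pairp (I1 I2 : finType) (f1 : I1 -> set T) (f2 : I2 -> set T) :=
  fun p : I1 * I2 => f1 p.1 `&` f2 p.2.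

Lemma fpartT_pair (F0 : set (set T)) (I1 I2 : finType) (f1 : I1 -> set T) (f2 : I2 -> set T) :
  fpartT <<s F0 >> f1 -> fpartT <<s F0 >> f2 -> fpartT <<s F0 >> (pairp f1 f2).
Proof.
move=> [m1 c1 d1] [m2 c2 d2]; split.
- by move=> p; apply: sgI.
- by move=> w; have [a ha] := c1 w; have [b hb] := c2 w; exists (a, b).
- move=> [a1 a2] [b1 b2] /=; rewrite xpair_eqE negb_and => /orP [h|h].
    by rewrite setIACA d1 // set0I.
  by rewrite setIACA d2 // setI0.
Qed.

Lemma fpartT_unit (S : set (set T)) : S setT -> fpartT S (fun _ : unit => setT).
Proof. by move=> ST; split => // [w|[] [] //]; exists tt. Qed.

Lemma fpartT_bool (S : set (set T)) X : S X -> S (~` X) ->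
  fpartT S (fun b : bool => if b then X else ~` X).
Proof.
move=> SX SC; split.
- by case.
- by move=> w; case: (pselect (X w)) => h; [exists true|exists false].
- by case; case => //= _; rewrite ?setICr ?setICl.
Qed.

Lemma cellok_pair (I1 I2 J1 J2 : finType) (f1 : I1 -> set T) (f2 : I2 -> set T)
  (g1 : J1 -> set T) (g2 : J2 -> set T) E :
  cellok f1 g1 E -> cellok (pairp f1 f2) (pairp g1 g2) E.
Proof.
move=> h [i1 i2] [j1 j2]; rewrite /pairp /=.
have sub : f1 i1 `&` f2 i2 `&` (g1 j1 `&` g2 j2) `<=` f1 i1 `&` g1 j1.
  by move=> w [[? ?] [? ?]].
by case: (h i1 j1) => H; [left|right]; apply: subset_trans sub H.
Qed.

Lemma cellok_pair2 (I1 I2 J1 J2 : finType) (f1 : I1 -> set T) (f2 : I2 -> set T)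
  (g1 : J1 -> set T) (g2 : J2 -> set T) E :
  cellok f2 g2 E -> cellok (pairp f1 f2) (pairp g1 g2) E.
Proof.
move=> h [i1 i2] [j1 j2]; rewrite /pairp /=.
have sub : f1 i1 `&` f2 i2 `&` (g1 j1 `&` g2 j2) `<=` f2 i2 `&` g2 j2.
  by move=> w [[? ?] [? ?]].
by case: (h i2 j2) => H; [left|right]; apply: subset_trans sub H.
Qed.

Section CellClosure.
Variables (I J : finType) (f : I -> set T) (g : J -> set T).

Lemma cellokC E : cellok f g E -> cellok f g (~` E).
Proof. by move=> h i j; case: (h i j) => H; [right; rewrite setCK|left]. Qed.

Lemma cellokU E1 E2 : cellok f g E1 -> cellok f g E2 -> cellok f g (E1 `|` E2).
Proof.
move=> h1 h2 i j; case: (h1 i j) => H1.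
  by left; apply: subset_trans H1 _; apply: subsetUl.
case: (h2 i j) => H2.
  by left; apply: subset_trans H2 _; apply: subsetUr.
by right; rewrite setCU => w cw; split; [apply: H1|apply: H2].
Qed.

Lemma cellok0 : cellok f g set0.
Proof. by move=> i j; right; rewrite setC0. Qed.

Lemma cellokI E1 E2 : cellok f g E1 -> cellok f g E2 -> cellok f g (E1 `&` E2).
Proof.
move=> h1 h2; rewrite -(setCK (E1 `&` E2)) setCI.
by apply: cellokC; apply: cellokU; apply: cellokC.
Qed.

Lemma cellokD E1 E2 : cellok f g E1 -> cellok f g E2 -> cellok f g (E1 `\` E2).
Proof. by move=> h1 h2; rewrite setDE; apply: cellokI => //; apply: cellokC. Qed.

Lemma cellok_big (K : Type) (s : seq K) (Q : pred K) (E : K -> set T) :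
  (forall k, Q k -> cellok f g (E k)) -> cellok f g (\big[setU/set0]_(k <- s | Q k) E k).
Proof.
move=> h; apply: (big_ind (cellok f g)) => //; first exact: cellok0.
exact: cellokU.
Qed.

End CellClosure.
End Frames.

Lemma cellok_measurable (I J : finType) {d : measure_display} {Om : measurableType d}
  (ff : I -> set Om) (gg : J -> set Om) E :
  (forall i, measurable (ff i)) -> (forall j, measurable (gg j)) ->
  (forall w, exists i, ff i w) -> (forall w, exists j, gg j w) ->
  cellok ff gg E -> measurable E.
Proof.
move=> mf mg cf cg h.
have -> : E = \big[setU/set0]_(p : I * J | `[< ff p.1 `&` gg p.2 `<=` E >]) (ff p.1 `&` gg p.2).
  apply/seteqP; split => w.
    move=> Ew; apply/bigsetU_memP; have [i fi] := cf w; have [j gj] := cg w.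
    exists (i, j); split => //=; apply/asboolP.
    case: (h i j) => // H; exfalso; exact: (H w).
  by move=> /bigsetU_memP [p [/asboolP H Hw]]; apply: H.
by apply: bigsetU_measurable => p _; apply: measurableI.
Qed.


Section App.
Context {R : realType} {d : measure_display} {Omega : measurableType d}.
Variable P : probability Omega R.
Variables (F0 G0 : set (set Omega)).
Hypothesis FM : forall X, <<s F0 >> X -> measurable X.
Hypothesis GM : forall X, <<s G0 >> X -> measurable X.

Definition Rep (E : set Omega) := exists (I J : finType) (f : I -> set Omega) (g : J -> set Omega),
  [/\ fpartT <<s F0 >> f, fpartT <<s G0 >> g & cellok f g E].

Definition symd (E E' : set Omega) := (E `\` E') `|` (E' `\` E).

Definition App (E : set Omega) := measurable E /\
  forall e : R, 0 < e -> exists E', Rep E' /\ pr P (symd E E') <= e.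

Lemma fpartT_mpart (S : set (set Omega)) (K : finType) (f : K -> set Omega) :
  (forall X, S X -> measurable X) -> fpartT S f -> mpart f.
Proof. by move=> SM [h1 h2 h3]; split => // k; apply: SM. Qed.

Lemma Rep_measurable E : Rep E -> measurable E.
Proof.
move=> [I [J [f [g [pf pg ok]]]]].
have [mf cf _] := fpartT_mpart FM pf; have [mg cg _] := fpartT_mpart GM pg.
exact: (cellok_measurable mf mg cf cg ok).
Qed.

Lemma common_frame N (E : nat -> set Omega) : (forall n, (n < N)%N -> Rep (E n)) ->
  exists (I J : finType) (f : I -> set Omega) (g : J -> set Omega),
    [/\ fpartT <<s F0 >> f, fpartT <<s G0 >> g & forall n, (n < N)%N -> cellok f g (E n)].
Proof.
elim: N => [_|N IH H].
  exists unit, unit, (fun _ => setT), (fun _ => setT).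
  by split => //; apply: fpartT_unit; apply: sgT.
have [I1 [J1 [f1 [g1 [pf1 pg1 ok1]]]]] := IH (fun n nN => H n (ltnW nN)).
have [I2 [J2 [f2 [g2 [pf2 pg2 ok2]]]]] := H N (ltnSn N).
exists (prod I1 I2), (prod J1 J2), (pairp f1 f2), (pairp g1 g2); split.
- exact: fpartT_pair.
- exact: fpartT_pair.
- move=> n; rewrite ltnS leq_eqVlt => /orP [/eqP ->|nN].
    exact: cellok_pair2.
  by apply: cellok_pair; apply: ok1.
Qed.

Lemma pr_symd U V : measurable U -> measurable V ->
  `|pr P U - pr P V| <= pr P (symd U V).
Proof.
move=> mU mV.
have mS : measurable (symd U V).
  by apply: measurableU; apply: measurableD.
have h1 : pr P U <= pr P V + pr P (symd U V).
  apply: le_trans (prUle P mV mS); apply: pr_le => //; first exact: measurableU.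
  move=> w Uw; case: (pselect (V w)) => Vw; [by left|by right; left].
have h2 : pr P V <= pr P U + pr P (symd U V).
  apply: le_trans (prUle P mU mS); apply: pr_le => //; first exact: measurableU.
  move=> w Vw; case: (pselect (U w)) => Uw; [by left|by right; right].
rewrite ler_norml; apply/andP; split; lra.
Qed.

Lemma pr_bigU_le (N : nat) (X : 'I_N -> set Omega) : (forall k, measurable (X k)) ->
  pr P (\big[setU/set0]_(k < N) X k) <= \sum_(k < N) pr P (X k).
Proof.
elim: N X => [X _|N IH X mX]; first by rewrite !big_ord0 pr0.
rewrite !big_ord_recr /=.
apply: le_trans (prUle P _ (mX _)) _.
  by apply: bigsetU_measurable => k _.
by rewrite lerD2r; apply: IH.
Qed.

Lemma Rep0 : Rep set0.
Proof.
exists unit, unit, (fun _ => setT), (fun _ => setT).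
by split; [apply: fpartT_unit; apply: sgT|apply: fpartT_unit; apply: sgT|apply: cellok0].
Qed.

Lemma App0 : App set0.
Proof.
split => // e e0; exists set0; split; first exact: Rep0.
by rewrite /symd set0D setU0 pr0 ltW.
Qed.

Lemma AppC A : App A -> App (~` A).
Proof.
move=> [mA h]; split; first exact: measurableC.
move=> e e0; have [E' [[I [J [f [g [pf pg ok]]]]] pe]] := h e e0.
exists (~` E'); split.
  by exists I, J, f, g; split => //; apply: cellokC.
by rewrite /symd !setDE !setCK setUC [X in _ `|` X]setIC [X in X `|` _]setIC.
Qed.

Lemma AppU (E : nat -> set Omega) : (forall n, App (E n)) -> App (\bigcup_n E n).
Proof.
move=> hE; have mE n : measurable (E n) by case: (hE n).
set U := \bigcup_n E n.
have mU : measurable U by apply: bigcup_measurable => n _.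
split => // e e0.
pose Sk k := \big[setU/set0]_(n < k.+1) E n.
have mSk k : measurable (Sk k) by apply: bigsetU_measurable => n _.
have SkU k : Sk k `<=` U.
  by move=> w /bigsetU_memP [n [_ Ew]]; exists n.
have cvS : pr P (Sk n) @[n --> \oo] --> pr P U.
  have hU : \bigcup_k Sk k = U by rewrite /U /Sk bigcup_bigsetU_bigcup.
  have nd : {homo Sk : a b / (a <= b)%N >-> (a <= b)%O}.
    move=> a b ab; apply/subsetPset => w /bigsetU_memP [n [_ Ew]].
    apply/bigsetU_memP.
    by exists (Ordinal (leq_trans (ltn_ord n) (ab : a.+1 <= b.+1)%N)).
  have h : (fun n => P (Sk n)) x @[x --> \oo] --> P U.
    by rewrite -hU; apply: (@nondecreasing_cvg_mu _ _ _ P Sk mSk (eq_ind_r _ mU hU) nd).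
  rewrite (prE P mU) in h.
  exact: fine_cvg h.
have [k hk] : exists k, pr P U - pr P (Sk k) <= e / 2.
  have e2 : 0 < e / 2 by rewrite divr_gt0.
  have := cvgr_dist_lt _ _ cvS _ e2.
  case=> N _ HN; exists N; have := HN N (leqnn N) => /= /ltW.
  by apply: le_trans; apply: ler_norm.
pose eps := e / 2 / (k.+1)%:R.
have eps0 : 0 < eps by rewrite /eps !divr_gt0.
have : forall n, exists E', Rep E' /\ pr P (symd (E n) E') <= eps.
  by move=> n; apply: (hE n).2.
move=> /choice [Ef hEf].
have mEf n : measurable (Ef n) by apply: Rep_measurable; case: (hEf n).
have [I [J [f [g [pf pg ok]]]]] := @common_frame k.+1 Ef (fun n _ => (hEf n).1).
exists (\big[setU/set0]_(n < k.+1) Ef n); split.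
  by exists I, J, f, g; split => //; apply: cellok_big => n _; apply: ok.
set V := \big[setU/set0]_(n < k.+1) Ef n.
have mV : measurable V by apply: bigsetU_measurable.
set W := \big[setU/set0]_(n < k.+1) symd (E n) (Ef n).
have msd n : measurable (symd (E n) (Ef n)).
  by apply: measurableU; apply: measurableD.
have mW : measurable W by apply: bigsetU_measurable.
have mUS : measurable (U `\` Sk k) by apply: measurableD.
have sub : symd U V `<=` (U `\` Sk k) `|` W.
  move=> w [[Uw nVw]|[Vw nUw]].
    case: (pselect (Sk k w)) => Sw; last by left.
    right; move: Sw => /bigsetU_memP [n [_ Ew]]; apply/bigsetU_memP; exists n; split => //.
    left; split => //; move=> Efw; apply: nVw; apply/bigsetU_memP; by exists n.
  right; move: Vw => /bigsetU_memP [n [_ Efw]]; apply/bigsetU_memP; exists n; split => //.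
  by right; split => // Ew; apply: nUw; exists n.
have msU : measurable (symd U V) by apply: measurableU; apply: measurableD.
apply: le_trans (pr_le P msU (measurableU _ _ mUS mW) sub) _.
apply: le_trans (prUle P mUS mW) _.
have h1 : pr P (U `\` Sk k) = pr P U - pr P (Sk k).
  rewrite (pr_split P mU (mSk k)) setIidr; last exact: SkU.
  by rewrite setDE addrC addKr.
have h2 : pr P W <= e / 2.
  apply: le_trans (@pr_bigU_le k.+1 (fun n => symd (E n) (Ef n)) (fun n => msd n)) _.
  have : \sum_(n < k.+1) pr P (symd (E n) (Ef n)) <= \sum_(n < k.+1) eps.
    by apply: ler_sum => n _; exact: (hEf n).2.
  move=> /le_trans; apply.
  rewrite sumr_const card_ord -[eps *+ k.+1]mulr_natr /eps.
  by rewrite divfK // pnatr_eq0.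
rewrite h1; lra.
Qed.

Lemma App_sigma : sigma_algebra setT App.
Proof.
split; first exact: App0.
  by move=> A hA; rewrite setTD; apply: AppC.
exact: AppU.
Qed.

Lemma App_Rep X : measurable X -> Rep X -> App X.
Proof.
move=> mX hX; split => // e e0; exists X; split => //.
by rewrite /symd setDv setU0 pr0 ltW.
Qed.

Lemma AppF X : <<s F0 >> X -> App X.
Proof.
move=> FX; apply: App_Rep; first exact: FM.
exists bool, unit, (fun b : bool => if b then X else ~` X), (fun _ => setT); split.
- by apply: fpartT_bool => //; apply: sgC.
- by apply: fpartT_unit; apply: sgT.
- by case => j; [left|right]; apply: subIsetl.
Qed.

Lemma AppG X : <<s G0 >> X -> App X.
Proof.
move=> GX; apply: App_Rep; first exact: GM.
exists unit, bool, (fun _ => setT), (fun b : bool => if b then X else ~` X); split.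
- by apply: fpartT_unit; apply: sgT.
- by apply: fpartT_bool => //; apply: sgC.
- by move=> i; case; [left|right]; apply: subIsetr.
Qed.

Lemma H_App X : <<s (<<s F0 >> `|` <<s G0 >>) >> X -> App X.
Proof.
apply: smallest_sub; first exact: App_sigma.
by move=> Y [FY|GY]; [apply: AppF|apply: AppG].
Qed.

End App.

Section Cont.
Context {R : realType}.

Lemma xlnx_bound (x : R) : 0 < x -> - (x * ln x) <= 2 * Num.sqrt x.
Proof.
move=> x0; set s := Num.sqrt x.
have s0 : 0 < s by rewrite /s sqrtr_gt0.
have xs : x = s ^+ 2 by rewrite /s sqr_sqrtr // ltW.
have lx : ln x = 2 * ln s by rewrite xs lnXn // mulr2n mulr_natl mulr2n.
have h : ln (s^-1) < s^-1 by apply: ln_sublinear; rewrite invr_gt0.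
rewrite lnV ?posrE // in h.
rewrite lx xs.
have : - (s ^+ 2 * (2 * ln s)) = 2 * s * (s * (- ln s)) by ring.
move=> ->.
have : s * (- ln s) <= s * s^-1 by rewrite ler_pM2l // ltW.
rewrite mulfV ?gt_eqF // => H.
have : 2 * s * (s * - ln s) <= 2 * s * 1 by rewrite ler_pM2l // mulr_gt0.
by rewrite mulr1.
Qed.

Lemma mi_term_bound (x a y : R) : 0 <= x -> x <= y -> y <= 1 -> x <= a -> a <= 1 ->
  `|mi_term x a y| <= 4 * Num.sqrt x.
Proof.
move=> x0 xy y1 xa a1; rewrite /mi_term.
case: eqP => [_|/eqP xn0]; first by rewrite normr0 mulr_ge0 // sqrtr_ge0.
have xp : 0 < x by rewrite lt_def xn0.
have ap : 0 < a by apply: lt_le_trans xa.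
have yp : 0 < y by apply: lt_le_trans xy.
rewrite ln_div ?posrE ?mulr_gt0 // lnM ?posrE //.
have la : ln x <= ln a by rewrite ler_ln ?posrE.
have ly : ln x <= ln y by rewrite ler_ln ?posrE.
have la0 : ln a <= 0 by apply: ln_le0.
have ly0 : ln y <= 0 by apply: ln_le0.
have hb := xlnx_bound xp.
have lo : x * ln x <= x * (ln x - (ln a + ln y)).
  by rewrite ler_pM2l //; lra.
have hi : x * (ln x - (ln a + ln y)) <= x * (- 2 * ln x).
  by rewrite ler_pM2l //; lra.
have e : x * (- 2 * ln x) = 2 * (- (x * ln x)) by ring.
have lx0 : ln x <= 0 by apply: ln_le0; lra.
have p : 0 <= - (x * ln x) by rewrite -mulrN mulr_ge0 // oppr_ge0.
rewrite ler_norml; apply/andP; split; lra.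
Qed.

Lemma mi_term_cvg (xn yn : nat -> R) (x y a : R) :
  xn n @[n --> \oo] --> x -> yn n @[n --> \oo] --> y ->
  (forall n, 0 <= xn n) -> (forall n, xn n <= yn n) -> (forall n, yn n <= 1) ->
  (forall n, xn n <= a) -> a <= 1 -> 0 <= x -> x <= y -> x <= a ->
  mi_term (xn n) a (yn n) @[n --> \oo] --> mi_term x a y.
Proof.
move=> cx cy x0 xy y1 xa a1 x0' xy' xa'.
case: (eqVneq x 0) => [x00|xn0].
  subst x; rewrite /mi_term eqxx.
  have cs : 4 * Num.sqrt (xn n) @[n --> \oo] --> (0 : R).
    rewrite -(mulr0 4) -sqrtr0.
    apply: cvgMr; apply: (continuous_cvg _ (@sqrt_continuous R 0)) cx.
  apply: (@squeeze_cvgr _ _ _ _ (fun n => - (4 * Num.sqrt (xn n))) (fun n => 4 * Num.sqrt (xn n))).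
  - apply: nearW => n; have := mi_term_bound (x0 n) (xy n) (y1 n) (xa n) a1.
    by rewrite ler_norml.
  - by rewrite -oppr0; apply: cvgN.
  - exact: cs.
have xp : 0 < x by rewrite lt_def xn0.
have ap : 0 < a by apply: lt_le_trans xa'.
have yp : 0 < y by apply: lt_le_trans xy'.
have ev : \forall n \near \oo, 0 < xn n.
  apply: filterS (cvgr_dist_lt _ _ cx _ xp) => n hn.
  have := ler_norm (x - xn n); lra.
have e : \forall n \near \oo, xn n * ln (xn n / (a * yn n)) = mi_term (xn n) a (yn n).
  by apply: filterS ev => n hn; rewrite /mi_term gt_eqF.
apply: cvg_trans (near_eq_cvg e) _.
rewrite /mi_term (gt_eqF xp).
apply: cvgM => //.
have cq : xn n / (a * yn n) @[n --> \oo] --> x / (a * y).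
  apply: cvgM => //; apply: cvgV; first by rewrite mulf_neq0 ?gt_eqF.
  by apply: cvgMr.
apply: (continuous_cvg _ (@continuous_ln R _ _)) cq.
by rewrite divr_gt0 ?mulr_gt0.
Qed.

Lemma cvg_bigsum (I : Type) (s : seq I) (Q : pred I) (u : nat -> I -> R) (l : I -> R) :
  (forall i, u n i @[n --> \oo] --> l i) ->
  \sum_(i <- s | Q i) u n i @[n --> \oo] --> \sum_(i <- s | Q i) l i.
Proof.
move=> h; elim: s => [|i s IH].
  by under eq_fun do rewrite big_nil; rewrite big_nil; apply: cvg_cst.
under eq_fun do rewrite big_cons; rewrite big_cons.
case: (Q i); last exact: IH.
exact: cvgD.
Qed.

End Cont.

Section ApproxPart.
Context {d : measure_display} {Omega : measurableType d}.
Variables (m' : nat) (B E : 'I_m'.+1 -> set Omega).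

Definition Qp l := E l `\` \big[setU/set0]_(l'' | l'' != l) E l''.
Definition Bp l := if l == ord0 then ~` \big[setU/set0]_(l' | l' != ord0) Qp l' else Qp l.

Lemma QpP l w : Qp l w <-> E l w /\ forall l'', l'' != l -> ~ E l'' w.
Proof.
split.
  move=> [El nb]; split => // l'' ne El''; apply: nb; apply/bigsetU_memP.
  by exists l''.
by move=> [El h]; split => // /bigsetU_memP [l'' [ne El'']]; exact: h ne El''.
Qed.

Lemma Bp_cellok (I J : finType) (f : I -> set Omega) (g : J -> set Omega) :
  (forall l, cellok f g (E l)) -> forall l, cellok f g (Bp l).
Proof.
move=> h.
have hQ l : cellok f g (Qp l) by apply: cellokD => //; apply: cellok_big.
by move=> l; rewrite /Bp; case: ifP => _ //; apply: cellokC; apply: cellok_big.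
Qed.

Hypothesis mE : forall l, measurable (E l).

Lemma Bp_mpart : mpart Bp.
Proof.
have mQ l : measurable (Qp l).
  by apply: measurableD => //; apply: bigsetU_measurable.
split.
- move=> l; rewrite /Bp; case: ifP => _ //; apply: measurableC.
  exact: bigsetU_measurable.
- move=> w; case: (pselect (exists l', l' != ord0 /\ Qp l' w)) => [[l' [ne Qw]]|H].
    by exists l'; rewrite /Bp (negbTE ne).
  exists ord0; rewrite /Bp eqxx => /bigsetU_memP [l' [ne Qw]].
  by apply: H; exists l'.
- move=> a b ab; apply/seteqP; split => // w []; rewrite /Bp.
  case: (eqVneq a ord0) => [ea|an0]; case: (eqVneq b ord0) => [eb|bn0].
  + by move: ab; rewrite ea eb eqxx.
  + move=> nU Qb; apply: nU; apply/bigsetU_memP; exists b; split => //.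
  + move=> Qa nU; apply: nU; apply/bigsetU_memP; exists a; split => //.
  + move=> /QpP [Ea _] /QpP [_ h]; exact: h a ab Ea.
Qed.

Lemma Bp_symd : mpart B -> forall l,
  symd (B l) (Bp l) `<=` \big[setU/set0]_l' symd (B l') (E l').
Proof.
move=> [mB covB disB] l w Hw; apply: contrapT => Hn.
have HBE l' : B l' w <-> E l' w.
  split => h; apply: contrapT => h'; apply: Hn; apply/bigsetU_memP; exists l'.
    by split => //; left.
  by split => //; right.
have [l0 Bl0] := covB w.
have BP l' : B l' w <-> l' = l0.
  split => [Bl'|->] //; apply/eqP; apply: contraT => ne.
  by have := disB _ _ ne => /seteqP [H _]; case: (H w (conj Bl' Bl0)).
have QP l' : Qp l' w <-> l' = l0.
  rewrite QpP; split => [[El' _]|->]; first by apply/BP/HBE.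
  split; first by apply/HBE/BP.
  by move=> l'' ne /HBE /BP E''; move: ne; rewrite E'' eqxx.
have BpP : Bp l w <-> l = l0.
  rewrite /Bp; case: (eqVneq l ord0) => [->|ln0]; last exact: QP.
  split.
    move=> nU; apply/eqP; apply: contraT => ne; exfalso; apply: nU; apply/bigsetU_memP.
    by exists l0; split; [rewrite eq_sym|apply/QP].
  move=> E0 /bigsetU_memP [l' [ne /QP E']]; by move: ne; rewrite E' -E0 eqxx.
case: Hw => [[/BP h1 h2]|[/BpP h1 h2]].
  by apply: h2; apply/BpP.
by apply: h2; apply/BP.
Qed.

End ApproxPart.

Lemma cvg_close {R : realType} (u : nat -> R) (v c : R) :
  (forall n, `|v - u n| <= c * (n.+1%:R)^-1) -> u n @[n --> \oo] --> v.
Proof.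
move=> h.
have ch : c * (n.+1%:R)^-1 @[n --> \oo] --> (0 : R).
  rewrite -(mulr0 c); apply: cvgMr; exact: cvg_harmonic.
apply: (@squeeze_cvgr _ _ _ _ (fun n => v - c * (n.+1%:R)^-1) (fun n => v + c * (n.+1%:R)^-1)).
- apply: nearW => n; have := h n; rewrite ler_norml => /andP [h1 h2].
  move: h1 h2; rewrite /=; move: (c / n.+1%:R) => t h1 h2; apply/andP; split; lra.
- by rewrite -[X in _ --> X]subr0; apply: cvgB => //; apply: cvg_cst.
- by rewrite -[X in _ --> X]addr0; apply: cvgD => //; apply: cvg_cst.
Qed.

Section MainIneq.
Context {R : realType} {d : measure_display} {Omega : measurableType d}.
Variable P : probability Omega R.
Variables (F0 G0 : set (set Omega)).
Hypothesis FM : forall X, <<s F0 >> X -> measurable X.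
Hypothesis GM : forall X, <<s G0 >> X -> measurable X.
Variables (m : nat) (A : 'I_m -> set Omega) (A0 : set (set Omega)).
Hypothesis pA : is_fpart A0 A.
Hypothesis mA : forall k, measurable (A k).
Hypothesis indA : forall k X Y, <<s F0 >> X -> <<s G0 >> Y ->
  pr P (A k `&` (X `&` Y)) = pr P (A k `&` X) * pr P Y.
Hypothesis indF : forall X Y, <<s F0 >> X -> <<s G0 >> Y ->
  pr P (X `&` Y) = pr P X * pr P Y.

Lemma mpart_pair (I J : finType) (f : I -> set Omega) (g : J -> set Omega) :
  mpart f -> mpart g -> mpart (pairp f g).
Proof.
move=> [m1 c1 d1] [m2 c2 d2]; split.
- by move=> p; apply: measurableI.
- by move=> w; have [a ha] := c1 w; have [b hb] := c2 w; exists (a, b).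
- move=> [a1 a2] [b1 b2] /=; rewrite xpair_eqE negb_and => /orP [h|h].
    by rewrite /pairp /= setIACA d1 // set0I.
  by rewrite /pairp /= setIACA d2 // setI0.
Qed.

Lemma frame_le (I J L : finType) (f : I -> set Omega) (g : J -> set Omega)
  (Bx : L -> set Omega) :
  fpartT <<s F0 >> f -> fpartT <<s G0 >> g -> mpart Bx ->
  (forall l, cellok f g (Bx l)) ->
  ((msT P A Bx)%:E <= mutual_info P A0 <<s F0 >>)%E.
Proof.
move=> pf pg pB ok.
have mf := fpartT_mpart FM pf; have mg := fpartT_mpart GM pg.
have pC := mpart_pair mf mg.
have [_ covB _] := pB.
apply: (@le_trans _ _ (msT P A (pairp f g))%:E).
  rewrite lee_fin; apply: msT_refine => // -[i j].
  case: (pselect (exists w, pairp f g (i, j) w)) => [[w Cw]|H].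
    have [l Bl] := covB w; exists l.
    by case: (ok l i j) => // H; exfalso; exact: (H w Cw).
  have [l _] := covB point; exists l => w Cw; exfalso; apply: H; by exists w.
rewrite (_ : msT P A (pairp f g) = msT P A f).
  have [Ff covf disf] := pf.
  exact: msT_le_mi.
apply: msT_prod => //.
- by move=> k i j; apply: indA; [case: pf|case: pg].
- by move=> i j; apply: indF; [case: pf|case: pg].
Qed.

Lemma mi_ub (m' : nat) (B : 'I_m' -> set Omega) :
  is_fpart <<s (<<s F0 >> `|` <<s G0 >>) >> B ->
  ((mi_sum P A B)%:E <= mutual_info P A0 <<s F0 >>)%E.
Proof.
move=> [HB covB disB].
have HApp X := @H_App _ _ _ P F0 G0 FM GM X.
have mB l : measurable (B l) by case: (HApp _ (HB l)).
have pB : mpart B.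
  split => // w; have : (\bigcup_(k in [set: 'I_m']) B k) w by rewrite covB.
  by case=> k _ Bk; exists k.
case: m' B HB covB disB HApp mB pB => [|m''] B HB covB disB HApp mB pB.
  by case: pB => _ /(_ point) [[]].
set MI := mutual_info P A0 <<s F0 >>.
pose cst := (m''.+1)%:R : R.
have step : forall n : nat, exists Bn : 'I_m''.+1 -> set Omega,
  [/\ mpart Bn, ((msT P A Bn)%:E <= MI)%E &
      forall X l, measurable X ->
        `|pr P (X `&` B l) - pr P (X `&` Bn l)| <= cst * (n.+1%:R)^-1].
  move=> n.
  have e0 : 0 < (n.+1%:R : R)^-1 by rewrite invr_gt0.
  have : forall l : 'I_m''.+1, exists E', Rep F0 G0 E' /\ pr P (symd (B l) E') <= (n.+1%:R)^-1.
    by move=> l; apply: (HApp _ (HB l)).2.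
  move=> /choice [E hE].
  have mE l : measurable (E l) by apply: (Rep_measurable FM GM); case: (hE l).
  pose E' (k : nat) := if (k < m''.+1)%N then E (inord k) else set0.
  have hR : forall k, (k < m''.+1)%N -> Rep F0 G0 (E' k).
    by move=> k kl; rewrite /E' kl; case: (hE (inord k)).
  have [I [J [f [g [pf pg ok]]]]] := @common_frame _ _ F0 G0 m''.+1 E' hR.
  have okE l : cellok f g (E l).
    by have := ok l (ltn_ord l); rewrite /E' ltn_ord inord_val.
  exists (Bp E); split.
  - exact: Bp_mpart.
  - apply: (frame_le pf pg (Bp_mpart mE)); exact: Bp_cellok.
  move=> X l mX.
  have mBp := Bp_mpart mE; have [mBpl _ _] := mBp.
  have msd l' : measurable (symd (B l') (E l')).
    by apply: measurableU; apply: measurableD.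
  apply: le_trans (pr_symd P (measurableI _ _ mX (mB l)) (measurableI _ _ mX (mBpl l))) _.
  set W := \big[setU/set0]_(l' < m''.+1) symd (B l') (E l').
  have mW : measurable W by apply: bigsetU_measurable.
  have msU : measurable (symd (X `&` B l) (X `&` Bp E l)).
    by apply: measurableU; apply: measurableD; apply: measurableI.
  have sub : symd (X `&` B l) (X `&` Bp E l) `<=` W.
    move=> w Hw; have HH := @Bp_symd _ _ _ B E pB l w. rewrite /W. apply: HH; move: Hw.
    by move=> [[[Xw Bw] /not_andP [//|nB]]|[[Xw Bw] /not_andP [//|nB]]]; [left|right].
  apply: le_trans (pr_le P msU mW sub) _.
  apply: le_trans (@pr_bigU_le _ _ _ P m''.+1 (fun l' => symd (B l') (E l')) (fun l' => msd l')) _.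
  have : \sum_(l' < m''.+1) pr P (symd (B l') (E l')) <= \sum_(l' < m''.+1) (n.+1%:R)^-1.
    by apply: ler_sum => l' _; case: (hE l').
  move=> /le_trans; apply.
  by rewrite sumr_const card_ord -[_ *+ m''.+1]mulr_natr mulrC.
have [Bs hBs] := choice step.
have Hle n : ((msT P A (Bs n))%:E <= MI)%E by case: (hBs n).
have mBs n l : measurable (Bs n l) by case: (hBs n) => -[mm _ _] _ _; apply: mm.
have cv : msT P A (Bs n) @[n --> \oo] --> msT P A B.
  rewrite /msT.
  apply: (cvg_bigsum (u := fun n k => \sum_(l < m''.+1)
     mi_term (pr P (A k `&` Bs n l)) (pr P (A k)) (pr P (Bs n l)))) => k.
  apply: (cvg_bigsum (u := fun n l =>
     mi_term (pr P (A k `&` Bs n l)) (pr P (A k)) (pr P (Bs n l)))) => l.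
  have mAB : measurable (A k `&` B l) by apply: measurableI.
  apply: mi_term_cvg.
  - apply: (@cvg_close _ _ _ cst) => n.
    by case: (hBs n) => _ _ /(_ (A k) l (mA k)).
  - apply: (@cvg_close _ _ _ cst) => n.
    by case: (hBs n) => _ _ /(_ setT l measurableT); rewrite !setTI.
  - by move=> n; apply: pr_ge0.
  - by move=> n; apply: pr_le; [apply: measurableI|apply: mBs|apply: subIsetr].
  - by move=> n; apply: pr_le1.
  - by move=> n; apply: pr_le; [apply: measurableI|apply: mA|apply: subIsetl].
  - exact: pr_le1.
  - exact: pr_ge0.
  - by apply: pr_le => //; apply: subIsetr.
  - by apply: pr_le => //; apply: subIsetl.
change (mi_sum P A B) with (msT P A B).
move: Hle; rewrite /MI; case: (mutual_info P A0 <<s F0 >>) => [r| |] Hle.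
- rewrite lee_fin; apply: (closed_cvg _ (@closed_le _ r) _ _ cv).
  by apply: nearW => n; have := Hle n; rewrite lee_fin.
- exact: leey.
- by have := Hle 0%N.
Qed.

End MainIneq.

Section MIEq.
Context {R : realType} {d : measure_display} {Omega : measurableType d}.
Variable P : probability Omega R.
Variables (A0 F0 G0 : set (set Omega)).
Hypothesis AM : forall X, A0 X -> measurable X.
Hypothesis FM : forall X, <<s F0 >> X -> measurable X.
Hypothesis GM : forall X, <<s G0 >> X -> measurable X.
Hypothesis indA : forall a X Y, A0 a -> <<s F0 >> X -> <<s G0 >> Y ->
  pr P (a `&` (X `&` Y)) = pr P (a `&` X) * pr P Y.
Hypothesis indF : forall X Y, <<s F0 >> X -> <<s G0 >> Y ->
  pr P (X `&` Y) = pr P X * pr P Y.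

Lemma mi_indep_eq :
  mutual_info P A0 <<s (<<s F0 >> `|` <<s G0 >>) >> = mutual_info P A0 <<s F0 >>.
Proof.
apply/eqP; rewrite eq_le; apply/andP; split.
  apply: ge_ereal_sup => _ [m [m' [A [B [pA pB ->]]]]].
  have mA k : measurable (A k) by apply: AM; case: pA.
  apply: (mi_ub FM GM pA mA) => //.
  by move=> k X Y FX GY; apply: indA => //; case: pA.
apply: le_ereal_sup => _ [m [m' [A [B [pA [FB cB dB] ->]]]]].
exists m, m', A, B; split => //; split => // l.
by apply: sub_gen_smallest; left.
Qed.

End MIEq.

Section PrCvg.
Context {R : realType} {d : measure_display} {Omega : measurableType d}.
Variable P : probability Omega R.

Lemma pr_nd_cvg (F : nat -> set Omega) : (forall n, measurable (F n)) ->
  {homo F : a b / (a <= b)%N >-> (a <= b)%O} ->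
  pr P (F n) @[n --> \oo] --> pr P (\bigcup_n F n).
Proof.
move=> mF nd.
have mU : measurable (\bigcup_n F n) by apply: bigcup_measurable => n _.
have h : (fun n => P (F n)) x @[x --> \oo] --> P (\bigcup_n F n).
  exact: (@nondecreasing_cvg_mu _ _ _ P F mF mU nd).
rewrite (prE P mU) in h.
exact: fine_cvg h.
Qed.

Lemma pr_indep_lambda (H : set Omega) : measurable H ->
  lambda_system setT [set E | measurable E /\ pr P (E `&` H) = pr P E * pr P H].
Proof.
move=> mH; split => //.
- by split => //; rewrite setTI prT mul1r.
- move=> A B BA [mA hA] [mB hB]; split; first exact: measurableD.
  have e1 := pr_split P (measurableI _ _ mA mH) mB.
  have e2 := pr_split P mA mB.
  rewrite (_ : A `&` H `&` B = B `&` H) in e1; last first.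
    by rewrite setIAC; congr (_ `&` _); apply/setIidr.
  rewrite (_ : A `&` B = B) in e2; last by apply/setIidr.
  rewrite (_ : (A `\` B) `&` H = A `&` H `&` ~` B); last by rewrite setDE setIAC.
  rewrite setDE.
  have : pr P (A `&` H `&` ~` B) = pr P (A `&` H) - pr P (B `&` H) by rewrite e1; ring.
  move=> ->; rewrite hA hB.
  have : pr P (A `&` ~` B) = pr P A - pr P B by rewrite e2; ring.
  by move=> ->; ring.
- move=> F nd hF.
  have mF n : measurable (F n) by case: (hF n).
  have mU : measurable (\bigcup_n F n) by apply: bigcup_measurable => n _.
  split => //.
  have nd' : {homo (fun n => F n `&` H) : a b / (a <= b)%N >-> (a <= b)%O}.
    move=> a b ab; apply/subsetPset; apply: setSI; apply/subsetPset; exact: nd.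
  have c1 := pr_nd_cvg (fun n => measurableI _ _ (mF n) mH) nd'.
  rewrite -setI_bigcupl in c1.
  have c2 := pr_nd_cvg mF nd.
  have c3 : pr P (F n `&` H) @[n --> \oo] --> pr P (\bigcup_n F n) * pr P H.
    under eq_fun do rewrite (proj2 (hF _)).
    exact: cvgMl.
  exact: (cvg_unique (@Rhausdorff R) c1 c3).
Qed.

End PrCvg.

Section Indep.
Context {R : realType} {d : measure_display} {Omega : measurableType d}.
Variable P : probability Omega R.
Variables (I : choiceType) (D : set I) (X : I -> Omega -> R).
Hypothesis mX : forall k, measurable_fun setT (X k).
Hypothesis indep : mutually_independent P D X.

Definition gens (D1 : set I) : set (set Omega) :=
  [set E | exists k, D1 k /\ exists B : set R, measurable B /\ E = X k @^-1` B].

Lemma sigma_genE D1 : sigma_gen D1 X = <<s gens D1 >>.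
Proof. by []. Qed.

Lemma gens_meas D1 E : <<s gens D1 >> E -> measurable E.
Proof.
apply: smallest_sub; first exact: sigma_algebra_measurable.
move=> _ [k [_ [B [mB ->]]]]; rewrite -[_ @^-1` _]setTI; exact: mX.
Qed.

Definition rect (J : seq I) (Bf : I -> set R) := \bigcap_(k in [set` J]) X k @^-1` Bf k.

Lemma rectE J Bf : rect J Bf = \big[setI/setT]_(k <- J) X k @^-1` Bf k.
Proof. exact: bigcap_seq. Qed.

Lemma rectP J Bf w : rect J Bf w <-> forall k, k \in J -> Bf k (X k w).
Proof. by split => [h k kJ|h k kJ]; [apply: h|apply: h]. Qed.

Definition Pi (D1 : set I) : set (set Omega) :=
  [set E | exists J Bf, [/\ uniq J, (forall k, k \in J -> D1 k),
     (forall k, measurable (Bf k)) & E = rect J Bf]].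

Lemma rect_meas J Bf : (forall k, measurable (Bf k)) -> measurable (rect J Bf).
Proof.
move=> mB; rewrite rectE; apply: bigsetI_measurable => k _.
rewrite -[_ @^-1` _]setTI; exact: mX.
Qed.

Lemma Pi_setI D1 : setI_closed (Pi D1).
Proof.
move=> _ _ [J1 [B1 [u1 d1 m1 ->]]] [J2 [B2 [u2 d2 m2 ->]]].
exists (undup (J1 ++ J2)),
  (fun k => (if k \in J1 then B1 k else setT) `&` (if k \in J2 then B2 k else setT)).
split.
- exact: undup_uniq.
- by move=> k; rewrite mem_undup mem_cat => /orP [/d1|/d2].
- by move=> k; apply: measurableI; case: ifP.
apply/seteqP; split => w.
  move=> [/rectP h1 /rectP h2]; apply/rectP => k; rewrite mem_undup mem_cat.
  move=> _; split; case: ifP => // kJ; [exact: h1|exact: h2].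
move=> /rectP h; split; apply/rectP => k kJ.
  have := h k; rewrite mem_undup mem_cat kJ /= => /(_ isT) [].
  by rewrite ?kJ.
have := h k; rewrite mem_undup mem_cat kJ orbT => /(_ isT) [_].
by rewrite ?kJ.
Qed.

Lemma gens_Pi D1 : gens D1 `<=` Pi D1.
Proof.
move=> _ [k [Dk [B [mB ->]]]]; exists [:: k], (fun _ => B); split => //.
- by move=> j; rewrite inE => /eqP ->.
apply/seteqP; split => w.
  by move=> h; apply/rectP => j; rewrite inE => /eqP ->.
by move=> /rectP /(_ k); rewrite inE eqxx => /(_ isT).
Qed.

Lemma Pi_sub D1 : Pi D1 `<=` <<s gens D1 >>.
Proof.
move=> _ [J [Bf [u dJ mB ->]]]; rewrite rectE.
rewrite big_seq; apply: (big_ind (fun E => <<s gens D1 >> E)).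
- exact: sgT.
- by move=> A B; apply: sgI.
by move=> k kJ; apply: sub_gen_smallest; exists k; split; [apply: dJ|exists (Bf k)].
Qed.

Lemma gens_PiE D1 : <<s gens D1 >> = <<s Pi D1 >>.
Proof.
apply/seteqP; split.
  apply: smallest_sub; first exact: smallest_sigma_algebra.
  by move=> E /gens_Pi; apply: sub_gen_smallest.
apply: smallest_sub; first exact: smallest_sigma_algebra.
exact: Pi_sub.
Qed.

Variables (D1 D2 : set I).
Hypothesis D1D : forall k, D1 k -> D k.
Hypothesis D2D : forall k, D2 k -> D k.
Hypothesis D12 : forall k, D1 k -> D2 k -> False.

Lemma Pi_indep E H : Pi D1 E -> Pi D2 H -> pr P (E `&` H) = pr P E * pr P H.
Proof.
move=> [J1 [B1 [u1 d1 m1 ->]]] [J2 [B2 [u2 d2 m2 ->]]].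
pose Bf k := if k \in J1 then B1 k else B2 k.
have uJ : uniq (J1 ++ J2).
  rewrite cat_uniq u1 u2 /= andbT; apply/hasPn => k kJ2; apply/negP => kJ1.
  exact: D12 (d1 _ kJ1) (d2 _ kJ2).
have mBf k : measurable (Bf k) by rewrite /Bf; case: ifP.
have e : rect J1 B1 `&` rect J2 B2 = rect (J1 ++ J2) Bf.
  apply/seteqP; split => w.
    move=> [/rectP h1 /rectP h2]; apply/rectP => k; rewrite mem_cat /Bf.
    case: ifP => kJ1 /=; first by move=> _; apply: h1.
    exact: h2.
  move=> /rectP h; split; apply/rectP => k kJ.
    by have := h k; rewrite mem_cat kJ /Bf kJ => /(_ isT).
  have kJ1 : k \notin J1.
    by apply/negP => kJ1; exact: D12 (d1 _ kJ1) (d2 _ kJ).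
  by have := h k; rewrite mem_cat kJ orbT /Bf (negbTE kJ1) => /(_ isT).
rewrite e.
rewrite /rect (indep uJ) //; last first.
  by move=> k; rewrite mem_cat => /orP [/d1/D1D|/d2/D2D].
rewrite (indep u1 _ m1); last by move=> k /d1/D1D.
rewrite (indep u2 _ m2); last by move=> k /d2/D2D.
rewrite big_cat /=; congr (_ * _).
  by rewrite big_seq_cond [RHS]big_seq_cond; apply: eq_bigr => k /andP [kJ _]; rewrite /Bf kJ.
rewrite big_seq_cond [RHS]big_seq_cond; apply: eq_bigr => k /andP [kJ _].
have kJ1 : k \notin J1 by apply/negP => kJ1; exact: D12 (d1 _ kJ1) (d2 _ kJ).
by rewrite /Bf (negbTE kJ1).
Qed.

Lemma sigma_indep E H : sigma_gen D1 X E -> sigma_gen D2 X H ->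
  pr P (E `&` H) = pr P E * pr P H.
Proof.
rewrite !sigma_genE => sE sH.
have step1 : forall H, Pi D2 H -> forall E, <<s gens D1 >> E -> pr P (E `&` H) = pr P E * pr P H.
  move=> H' PH E' sE'.
  have mH' : measurable H'.
    by move: PH => [J [Bf [_ _ mB ->]]]; apply: rect_meas.
  rewrite gens_PiE in sE'.
  have := @lambda_system_subset _ _ (@Pi_setI D1) setT _ (pr_indep_lambda P mH') _ _ _ sE'.
  case => //.
  move=> E'' PE; split; first by move: PE => [J [Bf [_ _ mB ->]]]; apply: rect_meas.
  exact: Pi_indep.
have mE : measurable E by apply: gens_meas sE.
rewrite gens_PiE in sH.
have := @lambda_system_subset _ _ (@Pi_setI D2) setT _ (pr_indep_lambda P mE) _ _ _ sH.
case => // [H' PH|_]; last by rewrite setIC mulrC.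
split; first by move: PH => [J [Bf [_ _ mB ->]]]; apply: rect_meas.
by rewrite setIC mulrC; apply: step1.
Qed.

End Indep.

Section GMeas.
Context {R : realType} {d : measure_display} {Omega : measurableType d}.
Variable G : set (set Omega).

Definition gmeas (f : Omega -> R) :=
  measurable_fun (setT : set (g_sigma_algebraType G)) f.

Lemma gmeas_pre f B : gmeas f -> measurable B -> <<s G >> (f @^-1` B).
Proof. by move=> h mB; have := h measurableT B mB; rewrite setTI. Qed.

Lemma gmeasI f : (forall B, measurable B -> <<s G >> (f @^-1` B)) -> gmeas f.
Proof. by move=> h _ B mB; rewrite setTI; apply: h. Qed.

Lemma gmeasD f g : gmeas f -> gmeas g -> gmeas (fun w => f w + g w).
Proof. exact: (@measurable_funD _ (g_sigma_algebraType G)). Qed.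

Lemma gmeasB f g : gmeas f -> gmeas g -> gmeas (fun w => f w - g w).
Proof. exact: (@measurable_funB _ (g_sigma_algebraType G)). Qed.

Lemma gmeasM f g : gmeas f -> gmeas g -> gmeas (fun w => f w * g w).
Proof. exact: (@measurable_funM _ (g_sigma_algebraType G)). Qed.

Lemma gmeas_cst (r : R) : gmeas (fun _ => r).
Proof. exact: (@measurable_cst _ _ (g_sigma_algebraType G)). Qed.

Lemma gmeasZ (r : R) f : gmeas f -> gmeas (fun w => r * f w).
Proof. by move=> h; apply: gmeasM => //; apply: gmeas_cst. Qed.

Lemma gmeas_sum (K : Type) (s : seq K) (Q : pred K) (h : K -> Omega -> R) :
  (forall k, Q k -> gmeas (h k)) -> gmeas (fun w => \sum_(k <- s | Q k) h k w).
Proof.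
move=> hh; elim: s => [|k s IH].
  by under eq_fun do rewrite big_nil; apply: gmeas_cst.
under eq_fun do rewrite big_cons.
case: (boolP (Q k)) => Qk.
  by apply: gmeasD => //; apply: hh.
exact: IH.
Qed.

End GMeas.

Lemma gmeas_sub {R : realType} {d} {Omega : measurableType d} (G1 G2 : set (set Omega)) (f : Omega -> R) :
  (forall E, G1 E -> <<s G2 >> E) -> gmeas G1 f -> gmeas G2 f.
Proof.
move=> h hf; apply: gmeasI => B mB.
have : <<s G1 >> (f @^-1` B) by apply: gmeas_pre.
apply: smallest_sub => //; exact: smallest_sigma_algebra.
Qed.

Lemma sigma_gen_sub {R : realType} {d} {Omega : measurableType d} (I : Type) (D : set I)
  (X : I -> Omega -> R) (G : set (set Omega)) :
  (forall k, D k -> gmeas G (X k)) -> forall E, sigma_gen D X E -> <<s G >> E.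
Proof.
move=> h; apply: smallest_sub; first exact: smallest_sigma_algebra.
by move=> _ [k [Dk [B [mB ->]]]]; apply: gmeas_pre => //; apply: h.
Qed.

Lemma gmeas_var {R : realType} {d} {Omega : measurableType d} (I : Type) (D : set I)
  (X : I -> Omega -> R) k :
  D k -> gmeas [set E | exists k, D k /\ exists B : set R, measurable B /\ E = X k @^-1` B] (X k).
Proof.
move=> Dk; apply: gmeasI => B mB; apply: sub_gen_smallest.
by exists k; split => //; exists B.
Qed.

Lemma gmeas_meas {R : realType} {d} {Omega : measurableType d} (G : set (set Omega)) (f : Omega -> R) :
  (forall E, G E -> measurable E) -> gmeas G f -> measurable_fun setT f.
Proof.
move=> GM hf _ B mB; rewrite setTI.
have := gmeas_pre hf mB.
apply: smallest_sub => //; exact: sigma_algebra_measurable.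
Qed.

Definition genset {R : realType} {d} {Omega : measurableType d} {I : Type}
  (D : set I) (X : I -> Omega -> R) : set (set Omega) :=
  [set E | exists k, D k /\ exists B : set R, measurable B /\ E = X k @^-1` B].

Lemma in_horizon_pred tmax t : in_horizon tmax t.+1 -> in_horizon tmax t.
Proof. by case: tmax => //= T; apply: ltnW. Qed.

Lemma in_horizon0 tmax : in_horizon tmax 0.
Proof. by case: tmax. Qed.

Section Concrete.
Context {R : realType} {d : measure_display} {Omega : measurableType d}.
Variable P : probability Omega R.
Variables (n : nat) (adj : rel 'I_n) (i : 'I_n) (c theta : R) (tmax : option nat)
  (S : 'I_n -> Omega -> R) (Z0 : 'I_n -> 'I_n -> Omega -> R)
  (N : nat -> 'I_n -> 'I_n -> Omega -> R).
Hypothesis sadj : symmetric adj.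
Hypothesis iadj : irreflexive adj.
Hypothesis c0 : 0 < c.
Hypothesis th0 : 0 <= theta.
Hypothesis th1 : theta < 1.
Hypothesis mS : forall j, measurable_fun [set: Omega] (S j).
Hypothesis mZ : forall j k, measurable_fun [set: Omega] (Z0 j k).
Hypothesis mN : forall t j k, measurable_fun [set: Omega] (N t j k).

Definition Dall : set (('I_n + ('I_n * 'I_n)) + (nat * 'I_n * 'I_n)) :=
    [set x | match x with
             | inl (inl _) => True
             | inl (inr (j, k)) => adj j k
             | inr (t, j, k) => [/\ adj j k, (1 <= t)%N & in_horizon tmax t]
             end].
Definition Xf := (fun x => match x with
              | inl (inl j) => S j
              | inl (inr (j, k)) => Z0 j k
              | inr (t, j, k) => N t j k
              end).
Hypothesis indep : mutually_independent P Dall Xf.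

Definition O_dom := [set x : ('I_n + ('I_n * 'I_n)) + (nat * 'I_n * 'I_n) |
                match x with
                | inl (inl j) => j != i
                | inl (inr (j, k)) => adj j k /\ ((j != i) || (k != i))
                | inr (t, j, k) => [/\ adj j k, (1 <= t)%N & in_horizon tmax t]
                end].
Definition O_val := fun (x : ('I_n + ('I_n * 'I_n)) + (nat * 'I_n * 'I_n)) (w : Omega) =>
                match x with
                | inl (inl j) => S j w
                | inl (inr (j, k)) => Z0 j k w
                | inr (t, j, k) =>
                    dzhat adj c theta (fun l => S l w) (fun a b => Z0 a b w)
                          (fun u a b => N u a b w) t j k
                end.
Definition cik := fun k : 'I_n =>
               (1 + c * (degree adj i)%:R) / ((1 - theta) * 2 * c * Bsgn i k).
Definition T_dom := [set y : 'I_n * nat |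
                [/\ adj i y.1, (1 <= y.2)%N & in_horizon tmax y.2]].
Definition T_val := fun (y : 'I_n * nat) (w : Omega) => S i w + cik y.1 * N y.2 y.1 i w.

Definition Vdom := [set x : ('I_n + ('I_n * 'I_n)) + (nat * 'I_n * 'I_n) |
  match x with
  | inl (inl j) => j = i
  | inl (inr _) => False
  | inr (t, j, k) => [/\ adj j k, (1 <= t)%N, in_horizon tmax t & k = i]
  end].
Definition Wdom := [set x : ('I_n + ('I_n * 'I_n)) + (nat * 'I_n * 'I_n) |
  match x with
  | inl (inl j) => j != i
  | inl (inr (j, k)) => adj j k
  | inr (t, j, k) => [/\ adj j k, (1 <= t)%N, in_horizon tmax t & k != i]
  end].

Definition Zh t j k := fun w : Omega =>
  zhat adj c theta (fun l => S l w) (fun a b => Z0 a b w) (fun u a b => N u a b w) t j k.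

Definition SumZ t k := fun w : Omega => \sum_(l | adj k l) Bsgn k l * Zh t k l w.

Lemma Zh_succ t j k w : Zh t.+1 j k w = Zh t j k w + O_val (inr (t.+1, j, k)) w.
Proof. by []. Qed.

Lemma Dz_eq t j k w : O_val (inr (t.+1, j, k)) w =
  theta * Zh t j k w + (1 - theta) * (Zh t k j w + 2 * c * Bsgn k j *
    ((S k w - SumZ t k w) / (1 + c * (degree adj k)%:R))) - Zh t j k w + N t.+1 j k w.
Proof. by []. Qed.

Lemma Bsgn_neq0 (a b : 'I_n) : (Bsgn a b : R) != 0.
Proof. by rewrite /Bsgn; case: ifP => _; rewrite ?oppr_eq0 oner_neq0. Qed.

Lemma den_neq0 k : 1 + c * (degree adj k)%:R != 0.
Proof. by rewrite gt_eqF // ltr_pwDl // mulr_ge0 // ltW. Qed.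

Lemma Dz_eqT t j w : O_val (inr (t.+1, j, i)) w =
  theta * Zh t j i w + (1 - theta) * Zh t i j w
  - (1 - theta) * (2 * c * Bsgn i j) * (SumZ t i w / (1 + c * (degree adj i)%:R))
  - Zh t j i w + T_val (j, t.+1) w / cik j.
Proof.
rewrite Dz_eq /T_val /cik /=.
have h1 := den_neq0 i; have h2 := Bsgn_neq0 i j.
have h3 : 1 - theta != 0 by rewrite subr_eq0 eq_sym lt_eqF.
have h4 : c != 0 by rewrite gt_eqF.
have h5 : (2 : R) != 0 by rewrite pnatr_eq0.
field.
by rewrite h1 h2 h3 h4.
Qed.

Definition HG := <<s genset T_dom T_val >> `|` <<s genset Wdom Xf >>.
Definition OG := genset O_dom O_val.

Lemma gW (f : Omega -> R) : gmeas (genset Wdom Xf) f -> gmeas HG f.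
Proof.
apply: gmeas_sub => E hE; apply: sub_gen_smallest; right; exact: sub_gen_smallest.
Qed.

Lemma Wvar x : Wdom x -> gmeas HG (Xf x).
Proof. by move=> Wx; apply: gW; apply: gmeas_var. Qed.

Lemma Tvar y : T_dom y -> gmeas HG (T_val y).
Proof.
move=> Ty; apply: (@gmeas_sub _ _ _ (genset T_dom T_val)); last by apply: gmeas_var.
by move=> E hE; apply: sub_gen_smallest; left; exact: sub_gen_smallest.
Qed.

Lemma adj_neq j k : adj j k -> j != k.
Proof. by apply: contraTneq => ->; rewrite iadj. Qed.

Lemma SumZ_g (G : set (set Omega)) t k : (forall l, adj k l -> gmeas G (Zh t k l)) -> gmeas G (SumZ t k).
Proof.
move=> h; apply: gmeas_sum => l al; apply: gmeasZ; exact: h.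
Qed.

Lemma Dz_HG t j k : in_horizon tmax t.+1 -> adj j k ->
  (forall a b, adj a b -> gmeas HG (Zh t a b)) -> gmeas HG (O_val (inr (t.+1, j, k))).
Proof.
move=> ht ajk IH; case: (eqVneq k i) => [ki|ki].
  subst k.
  have aij : adj i j by rewrite sadj.
  rewrite (_ : O_val (inr (t.+1, j, i)) = fun w => theta * Zh t j i w + (1 - theta) * Zh t i j w
    - (1 - theta) * (2 * c * Bsgn i j) * (SumZ t i w / (1 + c * (degree adj i)%:R))
    - Zh t j i w + T_val (j, t.+1) w / cik j); last first.
    by apply: funext => w; apply: Dz_eqT.
  apply: gmeasD; last by apply: gmeasM; [apply: Tvar|apply: gmeas_cst].
  apply: gmeasB; last exact: IH.
  apply: gmeasB.
    by apply: gmeasD; apply: gmeasZ; apply: IH.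
  apply: gmeasZ; apply: gmeasM; last exact: gmeas_cst.
  by apply: SumZ_g => l al; apply: IH.
rewrite (_ : O_val (inr (t.+1, j, k)) = fun w =>
  theta * Zh t j k w + (1 - theta) * (Zh t k j w + 2 * c * Bsgn k j *
    ((S k w - SumZ t k w) / (1 + c * (degree adj k)%:R))) - Zh t j k w + N t.+1 j k w); last first.
  by apply: funext => w; apply: Dz_eq.
have akj : adj k j by rewrite sadj.
apply: gmeasD; last by apply: (Wvar (x := inr (t.+1, j, k))).
apply: gmeasB; last exact: IH.
apply: gmeasD; first by apply: gmeasZ; apply: IH.
apply: gmeasZ; apply: gmeasD; first exact: IH.
apply: gmeasZ; apply: gmeasM; last exact: gmeas_cst.
apply: gmeasB; first by apply: (Wvar (x := inl (inl k))).
by apply: SumZ_g => l al; apply: IH.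
Qed.

Lemma Zh_HG t : in_horizon tmax t -> forall j k, adj j k -> gmeas HG (Zh t j k).
Proof.
elim: t => [_ j k ajk|t IH ht j k ajk].
  exact: (Wvar (x := inl (inr (j, k)))).
rewrite (_ : Zh t.+1 j k = fun w => Zh t j k w + O_val (inr (t.+1, j, k)) w) //.
apply: gmeasD; first exact: IH (in_horizon_pred ht) _ _ ajk.
apply: Dz_HG => //; exact: IH (in_horizon_pred ht).
Qed.

Lemma O_HG x : O_dom x -> gmeas HG (O_val x).
Proof.
case: x => [[j|[j k]]|[[t j] k]] /=.
- by move=> ji; apply: (Wvar (x := inl (inl j))).
- by move=> [ajk _]; apply: (Wvar (x := inl (inr (j, k)))).
- case: t => [[_ //]|t [ajk _ ht]].
  apply: Dz_HG => //; exact: Zh_HG (in_horizon_pred ht).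
Qed.

Lemma Ovar x : O_dom x -> gmeas OG (O_val x).
Proof. by move=> Ox; apply: gmeas_var. Qed.

Lemma O_edge j k : adj j k -> O_dom (inl (inr (j, k))).
Proof.
move=> ajk; split => //; have := adj_neq ajk.
by case: (eqVneq j i) => [->|] //= ik; rewrite eq_sym.
Qed.

Lemma Zh_OG t : in_horizon tmax t -> forall j k, adj j k -> gmeas OG (Zh t j k).
Proof.
elim: t => [_ j k ajk|t IH ht j k ajk].
  exact: (Ovar (O_edge ajk)).
rewrite (_ : Zh t.+1 j k = fun w => Zh t j k w + O_val (inr (t.+1, j, k)) w) //.
apply: gmeasD; first exact: IH (in_horizon_pred ht) _ _ ajk.
by apply: (Ovar (x := inr (t.+1, j, k))).
Qed.

Lemma T_OG y : T_dom y -> gmeas OG (T_val y).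
Proof.
case: y => j [|t] [/= aij // t1 ht].
have aji : adj j i by rewrite sadj.
have ht' := in_horizon_pred ht.
rewrite (_ : T_val (j, t.+1) = fun w => cik j * (O_val (inr (t.+1, j, i)) w -
  (theta * Zh t j i w + (1 - theta) * Zh t i j w
  - (1 - theta) * (2 * c * Bsgn i j) * (SumZ t i w / (1 + c * (degree adj i)%:R))
  - Zh t j i w))); last first.
  apply: funext => w; rewrite Dz_eqT.
  have cn : cik j != 0.
    have h3 : 1 - theta != 0 by rewrite subr_eq0 eq_sym lt_eqF.
    have h4 : c != 0 by rewrite gt_eqF.
    rewrite /cik mulf_neq0 ?den_neq0 // invr_eq0 !mulf_neq0 ?Bsgn_neq0 ?pnatr_eq0 //.
  move: cn; move: (cik j) => ck cn.
  by rewrite [X in ck * X]addrC addKr mulrC divfK.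
apply: gmeasZ; apply: gmeasB; first by apply: (Ovar (x := inr (t.+1, j, i))).
apply: gmeasB; last exact: Zh_OG.
apply: gmeasB; first by apply: gmeasD; apply: gmeasZ; apply: Zh_OG.
apply: gmeasZ; apply: gmeasM; last exact: gmeas_cst.
by apply: SumZ_g => l al; apply: Zh_OG.
Qed.

Lemma W_OG x : Wdom x -> gmeas OG (Xf x).
Proof.
case: x => [[j|[j k]]|[[t j] k]] /=.
- by move=> ji; apply: (Ovar (x := inl (inl j))).
- by move=> ajk; apply: (Ovar (O_edge ajk)).
case: t => [[_ //]|t [ajk _ ht ki]].
have ht' := in_horizon_pred ht.
have akj : adj k j by rewrite sadj.
rewrite (_ : N t.+1 j k = fun w => O_val (inr (t.+1, j, k)) w -
  (theta * Zh t j k w + (1 - theta) * (Zh t k j w + 2 * c * Bsgn k j *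
    ((S k w - SumZ t k w) / (1 + c * (degree adj k)%:R))) - Zh t j k w)); last first.
  by apply: funext => w; rewrite Dz_eq; ring.
apply: gmeasB; first by apply: (Ovar (x := inr (t.+1, j, k))).
apply: gmeasB; last exact: Zh_OG.
apply: gmeasD; first by apply: gmeasZ; apply: Zh_OG.
apply: gmeasZ; apply: gmeasD; first exact: Zh_OG.
apply: gmeasZ; apply: gmeasM; last exact: gmeas_cst.
apply: gmeasB; first by apply: (Ovar (x := inl (inl k))).
by apply: SumZ_g => l al; apply: Zh_OG.
Qed.

Lemma sigmaO_eq : sigma_gen O_dom O_val = <<s HG >>.
Proof.
apply/seteqP; split.
  by apply: sigma_gen_sub => x hx; exact: O_HG.
apply: smallest_sub; first exact: smallest_sigma_algebra.
move=> E [hT|hW].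
  move: E hT; apply: smallest_sub; first exact: smallest_sigma_algebra.
  by move=> _ [y [Ty [B [mB ->]]]]; apply: gmeas_pre (T_OG Ty) mB.
move: E hW; apply: smallest_sub; first exact: smallest_sigma_algebra.
by move=> _ [x [Wx [B [mB ->]]]]; apply: gmeas_pre (W_OG Wx) mB.
Qed.

Lemma final_eq : mutual_info P (sigma_rv (S i)) (sigma_gen O_dom O_val) =
  mutual_info P (sigma_rv (S i)) (sigma_gen T_dom T_val).
Proof.
rewrite sigmaO_eq /HG.
have mX : forall x, measurable_fun setT (Xf x).
  by case => [[j|[j k]]|[[t j] k]]; [exact: mS|exact: mZ|exact: mN].
have VD : forall x, Vdom x -> Dall x.
  by case => [[j|[j k]]|[[t j] k]] //= [].
have WD : forall x, Wdom x -> Dall x.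
  by case => [[j|[j k]]|[[t j] k]] //= [].
have VW : forall x, Vdom x -> Wdom x -> False.
  case => [[j|[j k]]|[[t j] k]] //=; first by move=> ->; rewrite eqxx.
  by move=> [_ _ _ ->] [_ _ _]; rewrite eqxx.
have VM E : sigma_gen Vdom Xf E -> measurable E by apply: gens_meas.
have WM E : <<s genset Wdom Xf >> E -> measurable E by apply: gens_meas.
have AV E : sigma_rv (S i) E -> sigma_gen Vdom Xf E.
  apply: sigma_gen_sub => -[] _.
  by apply: (@gmeas_var _ _ _ _ Vdom Xf (inl (inl i))).
have TV E : <<s genset T_dom T_val >> E -> sigma_gen Vdom Xf E.
  apply: sigma_gen_sub => -[k t] [/= aik t1 ht].
  apply: gmeasD; first by apply: (@gmeas_var _ _ _ _ Vdom Xf (inl (inl i))).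
  apply: gmeasZ.
  have aki : adj k i by rewrite sadj.
  by apply: (@gmeas_var _ _ _ _ Vdom Xf (inr (t, k, i))).
have ind E H : sigma_gen Vdom Xf E -> <<s genset Wdom Xf >> H ->
    pr P (E `&` H) = pr P E * pr P H.
  by move=> hE hH; apply: (sigma_indep mX indep VD WD VW hE hH).
apply: mi_indep_eq.
- by move=> E /AV /VM.
- by move=> E /TV /VM.
- exact: WM.
- move=> a X Y hA hX hY; rewrite setIA; apply: ind => //.
  by apply: sgI; [apply: AV|apply: TV].
- by move=> X Y hX hY; apply: ind => //; apply: TV.
Qed.

End Concrete.


Theorem theorem3
  (R : realType) (d : measure_display) (Omega : measurableType d)
  (P : probability Omega R)
  (n : nat) (adj : rel 'I_n) (i : 'I_n)
  (c theta sigmaz Delta0 gamma Deltamin : R) (tmax : option nat)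
  (S : 'I_n -> Omega -> R) (Z0 : 'I_n -> 'I_n -> Omega -> R)
  (N : nat -> 'I_n -> 'I_n -> Omega -> R) :
  simple_graph adj -> connected_graph adj ->
  0 < c -> 0 <= theta < 1 -> 0 < sigmaz -> 0 < Delta0 -> 0 < gamma < 1 ->
  0 < Deltamin -> tmax <> Some 0%N ->
  (* all random variables are measurable *)
  (forall j, measurable_fun [set: Omega] (S j)) ->
  (forall j k, measurable_fun [set: Omega] (Z0 j k)) ->
  (forall t j k, measurable_fun [set: Omega] (N t j k)) ->
  (* data, initial values and quantization errors are all mutually independent *)
  mutually_independent P
    [set x | match x with
             | inl (inl _) => True
             | inl (inr (j, k)) => adj j k
             | inr (t, j, k) => [/\ adj j k, (1 <= t)%N & in_horizon tmax t]
             end]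
    (fun x => match x with
              | inl (inl j) => S j
              | inl (inr (j, k)) => Z0 j k
              | inr (t, j, k) => N t j k
              end) ->
  (* Z_{j|k}^(0) ~ N(0, sigmaz^2) *)
  (forall j k, adj j k -> forall A, measurable A ->
     P (Z0 j k @^-1` A) = normal_prob 0 sigmaz A) ->
  (* N_{j|k}^(t) ~ Uniform[-Delta^(t)/2, Delta^(t)/2] *)
  (forall t j k, adj j k -> (1 <= t)%N -> in_horizon tmax t ->
     forall A, measurable A ->
     P (N t j k @^-1` A) =
       (((qstep gamma Delta0 Deltamin t)^-1)%:E *
        lebesgue_measure (A `&` `[(- (qstep gamma Delta0 Deltamin t / 2))%R,
                                    (qstep gamma Delta0 Deltamin t / 2)%R]))%E) ->
  let corrupt := fun j : 'I_n => j != i in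
  (* adversary view O *)
  let O_dom := [set x : ('I_n + ('I_n * 'I_n)) + (nat * 'I_n * 'I_n) |
                match x with
                | inl (inl j) => corrupt j
                | inl (inr (j, k)) => adj j k /\ (corrupt j || corrupt k)
                | inr (t, j, k) => [/\ adj j k, (1 <= t)%N & in_horizon tmax t]
                end] in
  let O_val := fun (x : ('I_n + ('I_n * 'I_n)) + (nat * 'I_n * 'I_n)) (w : Omega) =>
                match x with
                | inl (inl j) => S j w
                | inl (inr (j, k)) => Z0 j k w
                | inr (t, j, k) =>
                    dzhat adj c theta (fun l => S l w) (fun a b => Z0 a b w)
                          (fun u a b => N u a b w) t j k
                end in
  (* c_{i,k} = (1 + c d_i) / ((1 - theta) 2 c B_{i|k}) *)
  let cik := fun k : 'I_n =>
               (1 + c * (degree adj i)%:R) / ((1 - theta) * 2 * c * Bsgn i k) in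
  let T_dom := [set y : 'I_n * nat |
                [/\ adj i y.1, (1 <= y.2)%N & in_horizon tmax y.2]] in
  let T_val := fun (y : 'I_n * nat) (w : Omega) => S i w + cik y.1 * N y.2 y.1 i w in
  mutual_info P (sigma_rv (S i)) (sigma_gen O_dom O_val) =
  mutual_info P (sigma_rv (S i)) (sigma_gen T_dom T_val).
Proof.
move=> [sadj iadj] _ c0 /andP [th0 th1] _ _ _ _ _ mS mZ mN indep _ _.
move=> corrupt O_dom0 O_val0 cik0 T_dom0 T_val0.
exact: (final_eq i sadj iadj c0 th1 mS mZ mN indep).
Qed.
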